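(* Let $T$ be a finite rooted tree in which every inner node has at least two children, with node set $V$ and leaf set $L$. Let $X\subseteq V\setminus L$ and $s\in V\setminus X$. If $X$ is thin, then there exists a leaf $t$ which is a descendant of $s$ such that no node on the path from $t$ to $s$ belongs to $X$.
   Context: A set $X\subseteq V\setminus L$ of inner nodes is thin if for every $x\in X$ other than the root, the parent of $x$ does not belong to $X$, and $x$ has at least one sibling (possibly a leaf) that does not belong to $X$. Every node is its own descendant. *)

(* Defs.v *)
(* A finite rooted tree is given by a finite node type V,
   a root r and a parent map par with par r = r such that every node reaches
   the root by iterating par. *)
From mathcomp Require Import all_boot.
Set Implicit Arguments. Unset Strict Implicit. Unset Printing Implicit Defensive.

Section Trees.
Variables (V : finType) (r : V) (par : V -> V).

Definition rooted_tree : Prop :=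
  par r = r /\ forall x : V, exists n, iter n par x = r.

Definition children (x : V) : {set V} := [set y | (y != r) && (par y == x)].

Definition is_leaf (x : V) : bool := children x == set0.
Definition is_inner (x : V) : bool := ~~ is_leaf x.

Definition full_branching : Prop :=
  forall x : V, is_inner x -> 2 <= #|children x|.

Definition descendant (t s : V) : Prop := exists n, iter n par t = s.

Definition thin (X : {set V}) : Prop :=
  forall x, x \in X -> x != r ->
    par x \notin X /\
    exists y, [/\ y \in children (par x), y != x & y \notin X].
End Trees.

(* Main.v *)
Require Import Defs.
From mathcomp Require Import all_boot.
From Stdlib Require Import ClassicalEpsilon.

Theorem lemma3p7 (V : finType) (r : V) (par : V -> V)
  (Htree : rooted_tree r par) (Hfull : full_branching r par)
  (X : {set V}) (s : V)
  (HXinner : forall x, x \in X -> is_inner r par x)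
  (Hs : s \notin X)
  (Hthin : thin r par X) :
  exists t : V, is_leaf r par t /\
    exists n, iter n par t = s /\ forall k, k <= n -> iter k par t \notin X.
Proof.
have exr : forall y, exists n, (fun n => iter n par y == r) n.
  by move=> y; case: (Htree.2 y) => n Hn; exists n; apply/eqP.
pose d y := ex_minn (exr y).
have dchild : forall c, c != r -> d (par c) < d c.
  move=> c cr; rewrite /d; case: (ex_minnP (exr c)) => m Hm Hmin.
  case: m Hm Hmin => [|m] Hm Hmin; first by move: Hm cr => /= /eqP ->; rewrite eqxx.
  case: (ex_minnP (exr (par c))) => m' Hm' Hmin'.
  rewrite ltnS; apply: Hmin'; by rewrite -iterSr.
pose good y := exists n, iter n par y = s /\ forall k, k <= n -> iter k par y \notin X.
pose b y := if excluded_middle_informative (good y) then true else false.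
have bP : forall y, b y -> good y.
  by move=> y; rewrite /b; case: excluded_middle_informative.
have Pb : forall y, good y -> b y.
  by move=> y; rewrite /b; case: excluded_middle_informative.
have bs : b s by apply: Pb; exists 0; split => // k; rewrite leqn0 => /eqP ->.
case: (arg_maxnP d bs) => y /bP [n [Hn Hk]] Hmax.
exists y; split; last by exists n.
apply/negPn/negP => Hin.
have yX : y \notin X by have := Hk 0 (leq0n n).
have : exists c, [/\ c != r, par c = y & c \notin X].
  have := Hfull y Hin.
  case: (set_0Vmem (children r par y)) => [->|[c]]; first by rewrite cards0.
  rewrite inE => /andP [cr /eqP pc] _.
  case cX : (c \in X); last by exists c; rewrite cX.
  have [_ [z [zc _ zX]]] := Hthin c cX cr.
  move: zc; rewrite inE pc => /andP [zr /eqP pz].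
  by exists z.
move=> [c [cr pc cX]].
have gc : good c.
  exists n.+1; split; first by rewrite iterSr pc.
  case=> [|k] kn //=; rewrite -iterS iterSr pc; exact: Hk.
have := Hmax c (Pb c gc); have := dchild c cr; rewrite pc.
by move=> h1 h2; move: (leq_ltn_trans h2 h1); rewrite ltnn.
Qed.
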